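(* (a) Let $\rho(0)=1$, $\rho(t)=\frac1{2t}(1-\sqrt{1-4t})$ for $0<t\le1/4$, and $\kappa(t)=(1-\sqrt2\,\rho(t)t)^{-1}$ for $0\le t\le1/4$. Then $\rho$ and $\kappa$ are increasing on $[0,1/4]$, $\rho(t)\le\kappa(t)$ for all $t\in[0,1/4]$, and for every positive integer $n$, $\rho\big(\tfrac{n}{(n+1)^2}\big)=\tfrac{n+1}{n}$ and $\kappa\big(\tfrac{n}{(n+1)^2}\big)=\big(1-\tfrac{\sqrt2}{n+1}\big)^{-1}<\big(1-\tfrac{10}{7(n+1)}\big)^{-1}$. (b) Let $A\in M_2(\mathbb C)$ satisfy $\|A-A^2\|_{HS}\le\varepsilon<2/9$. Then $\|2A-I\|_{HS}\ge(2-6\|A-A^2\|_{HS})^{1/2}$, and $\operatorname{tr}(A)\in\bigcup_{j\in\{0,1,2\}}\overline{\mathbb D}_j(\sqrt2\rho(\varepsilon)\varepsilon)\subseteq\bigcup_{j\in\{0,1,2\}}\overline{\mathbb D}_j(10/21)$. Moreover: if $|\operatorname{tr}(A)-2|<1/2$ then $\|I-A\|_{HS}\le\kappa(\varepsilon)\varepsilon$; if $|\operatorname{tr}(A)|<1/2$ then $\|A\|_{HS}\le\kappa(\varepsilon)\varepsilon$; if $|\operatorname{tr}(A)-1|<1/2$ then there is a rank-one idempotent $P\in M_2(\mathbb C)$ with $\|A-P\|_{HS}\le\rho(\varepsilon)\varepsilon$.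
   Context: $\|A\|_{HS}=(\operatorname{tr}(A^*A))^{1/2}$ is the Hilbert–Schmidt norm; $\overline{\mathbb D}_w(r)$ is the closed disc in $\mathbb C$ of centre $w$ and radius $r$. *)

(* Defs.v *)
(* Complex numbers: an arbitrary numClosedFieldType C
   (an algebraically closed field with conjugation and norm, e.g. C). *)
From HB Require Import structures.
From mathcomp Require Import all_boot all_order all_algebra.
Set Implicit Arguments. Unset Strict Implicit. Unset Printing Implicit Defensive.
Import Order.TTheory GRing.Theory Num.Theory.
Local Open Scope ring_scope.

Definition rho (C : numClosedFieldType) (t : C) : C :=
  if t == 0 then 1 else (1 - sqrtC (1 - 4 * t)) / (2 * t).

Definition kappa (C : numClosedFieldType) (t : C) : C :=
  (1 - sqrtC 2 * rho t * t)^-1.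

Definition hs_norm (C : numClosedFieldType) (n : nat) (A : 'M[C]_n) : C :=
  sqrtC (\tr ((map_mx (fun z : C => z^*) A)^T *m A)).

Definition cdisc (C : numClosedFieldType) (w r : C) : pred C :=
  fun z => `|z - w| <= r.

(* Main.v *)
Require Import Defs.
From HB Require Import structures.
From mathcomp Require Import all_boot all_order all_algebra.
From mathcomp Require Import ring.
From mathcomp Require Import sesquilinear spectral.
Import Order.TTheory GRing.Theory Num.Theory.
Local Open Scope ring_scope.
Local Open Scope sesquilinear_scope.
Section S. Variable C : numClosedFieldType.
Implicit Types (x y z X e k u eps hh : C).
Lemma le_cert x y z : y - x = z -> 0 <= z -> x <= y.
Proof. by move=> h hz; rewrite -subr_ge0 h. Qed.
Lemma lt_cert x y z : y - x = z -> 0 < z -> x < y.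
Proof. by move=> h hz; rewrite -subr_gt0 h. Qed.
Lemma sq2_ge0 : 0 <= sqrtC (2:C). Proof. by rewrite sqrtC_ge0 ler0n. Qed.
Lemma sq2_sq : sqrtC (2:C) ^+ 2 = 2. Proof. exact: sqrtCK. Qed.
Lemma sq2_ge1 : 1 <= sqrtC (2:C).
Proof. by rewrite -[X in X <= _]sqrtC1 ler_sqrtC ?nnegrE ?ler0n ?ler01 // ler1n. Qed.
Lemma sq2_lt : 7 * sqrtC (2:C) < 10.
Proof.
rewrite -ltr_sqr ?nnegrE ?mulr_ge0 ?ler0n ?sq2_ge0 // exprMn sq2_sq.
by rewrite -!natrX -natrM ltr_nat.
Qed.
Lemma sq2_lt2 : sqrtC (2:C) < 2.
Proof.
rewrite -ltr_sqr ?nnegrE ?ler0n ?sq2_ge0 // sq2_sq.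
by rewrite -!natrX ltr_nat.
Qed.
Definition uu (t : C) := (1 - sqrtC (1 - 4*t)) / 2.
Lemma s_ex t : 0 <= t -> t <= 1/4 -> exists s : C, [/\ 0 <= s, s <= 1, s^+2 = 1 - 4*t & sqrtC (1-4*t) = s].
Proof.
move=> t0 t1; have h4 : 4 * t <= 1 by move: t1; rewrite ler_pdivlMr ?ltr0n // mulrC.
exists (sqrtC (1 - 4*t)); split => //.
- by rewrite sqrtC_ge0 subr_ge0.
- rewrite -[X in _ <= X]sqrtC1 ler_sqrtC ?nnegrE ?subr_ge0 ?ler01 //.
  by rewrite lerBlDr lerDl mulr_ge0 ?ler0n.
- exact: sqrtCK.
Qed.
Lemma uu_facts t : 0 <= t -> t <= 1/4 -> 0 <= uu t /\ uu t <= 1/2.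
Proof.
move=> t0 t1; have [s [s0 s1 s2 se]] := s_ex t t0 t1.
rewrite /uu se; split; first by rewrite divr_ge0 ?subr_ge0 ?ler0n.
rewrite ler_pM2r ?invr_gt0 ?ltr0n //. by rewrite lerBlDr lerDl.
Qed.
Lemma rho_eq t : 0 <= t -> t <= 1/4 -> rho t = (1 - uu t)^-1 /\ rho t * t = uu t.
Proof.
move=> t0 t1; have [s [s0 s1 s2 se]] := s_ex t t0 t1.
rewrite /rho /uu se; case: eqP => [tz|tn].
  move: se; rewrite tz mulr0 subr0 sqrtC1 => <-; rewrite subrr mul0r subr0 invr1 mulr0; split => //.
have ht : t = (1 - s^+2)/4 by rewrite s2; field.
have s1n : 1 + s != 0 by rewrite gt_eqF // ltr_wpDr.
have s2n : 1 - s^+2 != 0 by rewrite s2 subKr mulf_neq0 ?pnatr_eq0 //; apply/eqP.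
have e : 2 - (1 - s) = 1 + s by ring.
rewrite ht; split; field; by rewrite ?e ?s1n ?s2n.
Qed.
Lemma uu_mono s t : 0 <= s -> s < t -> t <= 1/4 -> uu s < uu t.
Proof.
move=> s0 st t1; have t0 := le_trans s0 (ltW st); have s1 := le_trans (ltW st) t1.
have [a [a0 a1 a2 ae]] := s_ex s s0 s1; have [b [b0 b1 b2 be]] := s_ex t t0 t1.
rewrite /uu ae be ltr_pM2r ?invr_gt0 ?ltr0n // ltrD2l ltrN2 -ae -be.
have ha : 0 <= 1 - 4*s by rewrite -a2 exprn_ge0.
have hb : 0 <= 1 - 4*t by rewrite -b2 exprn_ge0.
rewrite ltr_sqrtC ?nnegrE // ltrD2l ltrN2 ltr_pM2l ?ltr0n //.
Qed.
Lemma kappa_eq t : 0 <= t -> t <= 1/4 -> kappa t = (1 - sqrtC 2 * uu t)^-1.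
Proof. by move=> t0 t1; rewrite /kappa -mulrA (proj2 (rho_eq _ t0 t1)). Qed.
Lemma k_pos t : 0 <= t -> t <= 1/4 -> 0 < 1 - sqrtC 2 * uu t.
Proof.
move=> t0 t1; have [u0 u1] := uu_facts _ t0 t1.
rewrite subr_gt0; apply: (le_lt_trans (ler_wpM2l sq2_ge0 u1)).
by rewrite mulrA mulr1 ltr_pdivrMr ?ltr0n // mul1r sq2_lt2.
Qed.
Lemma part_a_mono :
  (forall s t : C, 0 <= s -> s < t -> t <= 1/4 -> rho s < rho t) /\
  (forall s t : C, 0 <= s -> s < t -> t <= 1/4 -> kappa s < kappa t) /\
  (forall t : C, 0 <= t -> t <= 1/4 -> rho t <= kappa t).
Proof.
split; [|split].
- move=> s t s0 st t1; have t0 := le_trans s0 (ltW st); have s1 := le_trans (ltW st) t1.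
  rewrite (proj1 (rho_eq _ s0 s1)) (proj1 (rho_eq _ t0 t1)).
  have [u0 u1] := uu_facts _ t0 t1; have [v0 v1] := uu_facts _ s0 s1.
  have p1 : 0 < 1 - uu t by rewrite subr_gt0 (le_lt_trans u1) // ltr_pdivrMr ?ltr0n // mul1r ltr1n.
  rewrite ltf_pV2 ?posrE // ?ltrD2l ?ltrN2 ?uu_mono //.
  by rewrite (lt_le_trans p1) // lerD2l lerN2 ltW // uu_mono.
- move=> s t s0 st t1; have t0 := le_trans s0 (ltW st); have s1 := le_trans (ltW st) t1.
  rewrite (kappa_eq _ s0 s1) (kappa_eq _ t0 t1).
  rewrite ltf_pV2 ?posrE ?k_pos // ltrD2l ltrN2 ltr_pM2l ?uu_mono //.
  by rewrite (lt_le_trans ltr01 sq2_ge1).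
- move=> t t0 t1; rewrite (proj1 (rho_eq _ t0 t1)) (kappa_eq _ t0 t1).
  have [u0 u1] := uu_facts _ t0 t1.
  have p1 : 0 < 1 - uu t by rewrite subr_gt0 (le_lt_trans u1) // ltr_pdivrMr ?ltr0n // mul1r ltr1n.
  rewrite lef_pV2 ?posrE ?k_pos // lerD2l lerN2.
  by rewrite -[X in X <= _]mul1r ler_wpM2r // sq2_ge1.
Qed.
Lemma part_a_n (n : nat) : (0 < n)%N ->
      rho (n%:R / (n.+1%:R ^+ 2) : C) = n.+1%:R / n%:R /\
      kappa (n%:R / (n.+1%:R ^+ 2) : C) = (1 - sqrtC 2 / n.+1%:R)^-1 /\
      (1 - sqrtC 2 / n.+1%:R)^-1 < ((1 : C) - 10 / (7 * n.+1%:R))^-1.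
Proof.
case: n => [//|m] _.
have n1 : (m.+1%:R : C) != 0 by rewrite pnatr_eq0.
have n2 : (m.+2%:R : C) != 0 by rewrite pnatr_eq0.
have m0 : (0 : C) <= m%:R by rewrite ler0n.
have n1' : (1 + m%:R : C) != 0 by rewrite addrC natr1 pnatr_eq0.
have n2' : (2 + m%:R : C) != 0 by rewrite addrC -natrD pnatr_eq0 addn2.
have hs : sqrtC (1 - 4 * (m.+1%:R / m.+2%:R ^+ 2)) = m%:R / m.+2%:R :> C.
  rewrite -[RHS]sqrCK ?divr_ge0 ?ler0n //; congr sqrtC.
  by rewrite -!natr1; field; rewrite -!natr1 in n2.
have hr : rho (m.+1%:R / (m.+2%:R ^+ 2) : C) = m.+2%:R / m.+1%:R.
  rewrite /rho mulf_eq0 invr_eq0 expf_eq0 (negbTE n1) (negbTE n2) /= hs.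
  by rewrite -!natr1; field; rewrite -!natr1 in n1 n2; rewrite n1 n2.
split => //; split.
  by rewrite /kappa hr; congr GRing.inv; field; rewrite ?n1' ?n2'.
have N0 : (0 : C) < m.+2%:R by rewrite ltr0n.
have p2 : (0 : C) < 1 - 10 / (7 * m.+2%:R).
  rewrite subr_gt0 ltr_pdivrMr ?mulr_gt0 ?ltr0n // mul1r -natrM ltr_nat.
  by rewrite !mulnS addnA; exact: ltn_addr.
have lt1 : (1 : C) - 10 / (7 * m.+2%:R) < 1 - sqrtC 2 / m.+2%:R.
  rewrite ltrD2l ltrN2 (_ : 10 / (7 * m.+2%:R) = (10/7) * m.+2%:R^-1 :> C); last first.
    by field; rewrite ?n2' ?pnatr_eq0.
  by rewrite ltr_pM2r ?invr_gt0 // ltr_pdivlMr ?ltr0n // mulrC sq2_lt.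
by rewrite ltf_pV2 ?posrE // (lt_trans p2 lt1).
Qed.
Lemma L_sq_le x y : 0 <= x -> x <= y -> x^+2 <= y^+2.
Proof. by move=> x0 xy; rewrite ler_sqr ?nnegrE // (le_trans x0 xy). Qed.
Lemma L_sq_rev x y : 0 <= x -> 0 <= y -> x^+2 <= y^+2 -> x <= y.
Proof. by move=> x0 y0; rewrite ler_sqr ?nnegrE. Qed.
Lemma L_sum2 x y : 0 <= x -> 0 <= y -> (x+y)^+2 <= 2*(x^+2+y^+2).
Proof.
move=> x0 y0; apply: (le_cert _ _ ((x-y)^+2)); first by ring.
by rewrite real_exprn_even_ge0 // realB // ger0_real.
Qed.
Lemma L_sqrt_le X e : 0 <= X -> 0 <= e -> X <= e^+2 -> sqrtC X <= e.
Proof. by move=> X0 e0 h; rewrite -(sqrCK e0) ler_sqrtC ?nnegrE ?exprn_ge0. Qed.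
Lemma G k X e : 0 < k -> 0 <= X -> 0 <= e -> k^+2 * X <= e^+2 -> sqrtC X <= k^-1 * e.
Proof.
move=> k0 X0 e0 h; apply: L_sqrt_le => //; first by rewrite mulr_ge0 // invr_ge0 ltW.
by rewrite exprMn exprVn ler_pdivlMl // exprn_gt0.
Qed.
Lemma pos_add x y : 0 < x -> 0 <= y -> 0 < x + y.
Proof. by move=> hx hy; have := ltr_leD hx hy; rewrite addr0. Qed.
Lemma L1 x u eps : 0 <= u -> eps = u - u^+2 -> `|x - x^+2| <= eps -> `|x| <= u \/ `|1 - x| <= u.
Proof.
move=> u0 ee hx; case E1: (`|x| <= u); first by left.
case E2: (`|1 - x| <= u); first by right.
have ur : u \is Num.real by apply: ger0_real.
have g1 : u < `|x| by rewrite real_ltNge ?E1 // normr_real.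
have g2 : u < `|1 - x| by rewrite real_ltNge ?E2 // normr_real.
have s1 : 1 <= `|x| + `|1 - x|.
  by have := ler_normD x (1 - x); rewrite (_ : x + (1 - x) = 1) ?normr1 //; ring.
have e1 : `|x - x^+2| = `|x| * `|1 - x| by rewrite -normrM; congr Num.norm; ring.
have : eps < `|x - x^+2|.
  apply: (lt_cert _ _ ((`|x| - u) * (`|1-x| - u) + u * (`|x| + `|1 - x| - 1))).
    by rewrite e1 ee; ring.
  by apply: pos_add; [rewrite mulr_gt0 // subr_gt0 | rewrite mulr_ge0 // subr_ge0].
by move=> h; have := lt_le_trans h hx; rewrite ltxx.
Qed.
Lemma Lf x y z : `|y - z| = 1 -> 1 - `|x - z| <= `|x - y|.
Proof.
move=> h; have := lerB_dist (y - z) (x - z); rewrite h distrC.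
by rewrite (_ : x - z - (y - z) = x - y) //; ring.
Qed.
Lemma Lbd x (cb : bool) : 1 - `|x - cb%:R| <= `|x - (~~cb)%:R|.
Proof. by apply: Lf; case: cb => /=; rewrite ?mulr0n ?mulr1n ?subr0 ?sub0r ?normrN normr1. Qed.
Lemma L2 x (cb : bool) u : `|x - cb%:R| <= u -> `|x - cb%:R| * (1-u) <= `|x - x^+2|.
Proof.
move=> hd.
have E : `|x - x^+2| = `|x - cb%:R| * `|x - (~~cb)%:R|.
  rewrite -normrM -[x - x^+2]opprK normrN; congr Num.norm.
  by clear hd; case: cb => /=; rewrite ?mulr0n ?mulr1n; ring.
rewrite E ler_wpM2l // (le_trans _ (Lbd x cb)) // lerD2l lerN2 //.
Qed.
Lemma L12 x u eps : 0 <= u -> eps = u - u^+2 -> `|x - x^+2| <= eps ->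
  exists cb : bool, `|x - cb%:R| <= u /\ `|x - cb%:R| * (1-u) <= `|x - x^+2|.
Proof.
move=> u0 ee hx; have [h|h] := L1 x _ _ u0 ee hx.
  by exists false; rewrite /= mulr0n subr0; split => //; have := L2 x false u; rewrite /= mulr0n subr0; apply.
exists true; rewrite /= mulr1n distrC; split => //.
have := L2 x true u; rewrite /= mulr1n => H. by rewrite (distrC 1 x); apply: H; rewrite distrC.
Qed.
Lemma Lm (m n : nat) : m != n -> 1 <= `|m%:R - n%:R : C|.
Proof.
case: (ltngtP m n) => // h _.
  by rewrite distrC -natrB ?normr_nat ?ler1n ?subn_gt0 // ltnW.
by rewrite -natrB ?normr_nat ?ler1n ?subn_gt0 // ltnW.
Qed.
Lemma Lj (tr r : C) (m n : nat) : r <= 10/21 -> `|tr - n%:R| <= r -> `|tr - m%:R| < 1/2 -> n = m.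
Proof.
move=> r1 h1 h2; case: (eqVneq n m) => // hnm; exfalso.
have := Lm _ _ hnm; rewrite (_ : n%:R - m%:R = (tr - m%:R) - (tr - n%:R)); last by ring.
move=> /(le_trans)/(_ (ler_normB _ _)) h3.
have h4 : `|tr - m%:R| + `|tr - n%:R| < 1/2 + 10/21 by rewrite ltr_leD // (le_trans h1 r1).
have h5 : (1/2 + 10/21 : C) < 1 by apply: (lt_cert _ _ (1/42)); [field | rewrite divr_gt0 ?ltr0n].
by have := lt_trans (le_lt_trans h3 h4) h5; rewrite ltxx.
Qed.
Lemma GK k (X1 X2 X3 Y1 Y2 Y3 : C) e hh : 0 < k -> k <= Y1 -> k <= Y2 -> k <= Y3 ->
  hh = (Y1*X1)^+2 + (Y2*X2)^+2 + (Y3*X3)^+2 -> hh <= e^+2 -> 0 <= e ->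
  0 <= X1 -> 0 <= X2 -> 0 <= X3 -> sqrtC (X1^+2 + X2^+2 + X3^+2) <= k^-1 * e.
Proof.
move=> k0 h1 h2 h3 he hle e0 x1 x2 x3; apply: G => //; first by rewrite !addr_ge0 ?exprn_ge0.
apply: le_trans hle; rewrite he !mulrDr -!exprMn.
apply: lerD; [apply: lerD|].
- exact: (L_sq_le _ _ (mulr_ge0 (ltW k0) x1) (ler_wpM2r x1 h1)).
- exact: (L_sq_le _ _ (mulr_ge0 (ltW k0) x2) (ler_wpM2r x2 h2)).
- exact: (L_sq_le _ _ (mulr_ge0 (ltW k0) x3) (ler_wpM2r x3 h3)).
Qed.
Lemma Lbd0 x : 1 - `|x - 1| <= `|x|.
Proof. by have := Lf x 0 1; rewrite subr0 sub0r normrN normr1; apply. Qed.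
Lemma Lbd1 x : 1 - `|x| <= `|x - 1|.
Proof. by have := Lf x 1 0; rewrite !subr0 normr1; apply. Qed.
Lemma Lsum0 x y : 1 - (`|x| + `|y|) <= `|1 - x - y|.
Proof.
have := lerB_normD 1 (-(x+y)); rewrite normr1 normrN (_ : 1 + - (x + y) = 1 - x - y); last by ring.
apply: le_trans; rewrite lerD2l lerN2; exact: ler_normD.
Qed.
Lemma Lsum1 x y : 1 - (`|x - 1| + `|y - 1|) <= `|1 - x - y|.
Proof.
have := lerB_normD (-1) (-((x-1)+(y-1))); rewrite normrN1 normrN.
rewrite (_ : -1 + - ((x - 1) + (y - 1)) = 1 - x - y); last by ring.
apply: le_trans; rewrite lerD2l lerN2; exact: ler_normD.
Qed.
Lemma le_tr (y x z : C) : x <= y -> y <= z -> x <= z.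
Proof. exact: le_trans. Qed.
Lemma scalar_b (a c d eps : C) :
  sqrtC (`|a - a^+2|^+2 + `|c*(1-a-d)|^+2 + `|d - d^+2|^+2) <= eps -> eps < 2/9 ->
  [/\ sqrtC (2 - 6 * sqrtC (`|a - a^+2|^+2 + `|c*(1-a-d)|^+2 + `|d - d^+2|^+2))
        <= sqrtC (`|2*a-1|^+2 + `|2*c|^+2 + `|2*d-1|^+2),
      (exists j : 'I_3, `|a + d - j%:R| <= sqrtC 2 * rho eps * eps),
      sqrtC 2 * rho eps * eps <= 10/21,
      (`|a + d - 2| < 1/2 -> sqrtC (`|1-a|^+2 + `|c|^+2 + `|1-d|^+2) <= kappa eps * eps) &
      ((`|a + d| < 1/2 -> sqrtC (`|a|^+2 + `|c|^+2 + `|d|^+2) <= kappa eps * eps) /\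
      (`|a + d - 1| < 1/2 -> (sqrtC (`|a|^+2 + `|d-1|^+2) <= rho eps * eps \/
                            sqrtC (`|a-1|^+2 + `|d|^+2) <= rho eps * eps)))].
Proof.
set p := `|a - a^+2|; set q := `|d - d^+2|; set r := `|c*(1-a-d)|.
set hh := p^+2 + r^+2 + q^+2 => Hh He.
have hh0 : 0 <= hh by rewrite !addr_ge0 ?exprn_ge0 ?normr_ge0.
have h0 : 0 <= sqrtC hh by rewrite sqrtC_ge0.
have e0 : 0 <= eps := le_trans h0 Hh.
have hhe : hh <= eps^+2 by have := L_sq_le _ _ h0 Hh; rewrite sqrtCK.
have e9 : eps * 9 < 2 by rewrite -ltr_pdivlMr ?ltr0n.
have e4 : eps <= 1/4.
  rewrite ler_pdivlMr ?ltr0n //.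
  apply: (le_cert _ _ ((2 - eps * 9) * (4/9) + 1/9)); first by field.
  apply: addr_ge0; last by rewrite divr_ge0 ?ler0n.
  apply: mulr_ge0; last by rewrite divr_ge0 ?ler0n.
  by rewrite subr_ge0 ltW.
have [s [s0 s1 s2 se]] := s_ex eps e0 e4.
have [ue ke] := (proj2 (rho_eq eps e0 e4), kappa_eq eps e0 e4).
have [u0 u12] := uu_facts eps e0 e4.
set u := uu eps in ue ke u0 u12.
have uE : u = (1 - s)/2 by rewrite /u /uu se.
have ee : eps = u - u^+2.
  rewrite uE (_ : eps = (1 - s^+2)/4); first by field.
  by rewrite s2; field.
have s3 : 1 < 3 * s.
  rewrite -ltr_sqr ?nnegrE ?mulr_ge0 ?ler0n // expr1n exprMn s2.
  apply: (lt_cert _ _ (4 * (2 - eps * 9))); first by ring.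
  by rewrite mulr_gt0 ?ltr0n // subr_gt0.
have u3 : 3 * u < 1.
  apply: (lt_cert _ _ ((3 * s - 1)/2)); first by rewrite uE; field.
  by rewrite divr_gt0 ?ltr0n // subr_gt0.
have u1 : 0 < 1 - u.
  by apply: (lt_cert _ _ ((1 - 3 * u) + 2 * u)); [ring | apply: pos_add; [rewrite subr_gt0 | rewrite mulr_ge0 ?ler0n]].
have su : sqrtC 2 * u <= 10/21.
  rewrite ler_pdivlMr ?ltr0n //.
  have := ler_pM (mulr_ge0 (ler0n _ 7) sq2_ge0) (mulr_ge0 (ler0n _ 3) u0) (ltW sq2_lt) (ltW u3).
  by rewrite mulr1 (_ : 7 * sqrtC 2 * (3 * u) = sqrtC 2 * u * 21) //; ring.
set k := 1 - sqrtC 2 * u.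
have k0 : 0 < k.
  apply: (lt_cert _ _ (11/21 + (10/21 - sqrtC 2 * u))); first by rewrite /k; field.
  by apply: pos_add; [rewrite divr_gt0 ?ltr0n | rewrite subr_ge0].
have pe : p^+2 + q^+2 <= hh by apply: (le_cert _ _ (r^+2)); [rewrite /hh; ring | rewrite exprn_ge0 ?normr_ge0].
have pe1 : p^+2 <= eps^+2.
  apply: (le_tr hh _ _ _ hhe); apply: (le_tr _ _ _ _ pe).
  by apply: (le_cert _ _ (q^+2)); [ring | rewrite exprn_ge0 ?normr_ge0].
have qe1 : q^+2 <= eps^+2.
  apply: (le_tr hh _ _ _ hhe); apply: (le_tr _ _ _ _ pe).
  by apply: (le_cert _ _ (p^+2)); [ring | rewrite exprn_ge0 ?normr_ge0].
have pe2 : p <= eps by apply: L_sq_rev => //; apply: normr_ge0.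
have qe2 : q <= eps by apply: L_sq_rev => //; apply: normr_ge0.
have [c1 [D1 F1]] := L12 a u eps u0 ee pe2.
have [c2 [D2 F2]] := L12 d u eps u0 ee qe2.
have ds : `|a - c1%:R|^+2 + `|d - c2%:R|^+2 <= u^+2.
  rewrite -(ler_pM2l (exprn_gt0 2 u1)).
  apply: (le_tr (p^+2 + q^+2)).
    rewrite mulrDr -!exprMn ![(1 - u) * _]mulrC.
    by apply: lerD; apply: L_sq_le => //; apply: mulr_ge0 => //; first [apply: normr_ge0 | exact: ltW].
  apply: (le_tr _ _ _ pe); apply: (le_tr _ _ _ hhe).
  by rewrite ee -exprMn (_ : u - u^+2 = (1-u)*u) //; ring.
have dsum : `|a - c1%:R| + `|d - c2%:R| <= sqrtC 2 * u.
  apply: L_sq_rev; [by apply: addr_ge0; apply: normr_ge0 | by rewrite mulr_ge0 ?sq2_ge0 | ].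
  apply: (le_tr _ _ _ (L_sum2 _ _ (normr_ge0 (a - c1%:R)) (normr_ge0 (d - c2%:R)))).
  by rewrite exprMn sq2_sq ler_wpM2l ?ler0n.
have trj : `|a + d - (c1 + c2)%N%:R| <= sqrtC 2 * u.
  apply: (le_tr _ _ _ _ dsum); rewrite natrD (_ : a + d - (c1%:R + c2%:R) = (a - c1%:R) + (d - c2%:R)); last by ring.
  exact: ler_normD.
have su' : sqrtC 2 * rho eps * eps <= 10/21 by rewrite -mulrA ue.
have key : forall m : nat, `|a + d - m%:R| < 1/2 -> (c1 + c2)%N = m.
  by move=> m hm; apply: (Lj _ _ _ _ su trj hm).
split.
-
  have pq : 2 * (p + q) <= 3 * sqrtC hh.
    apply: L_sq_rev; [by rewrite mulr_ge0 ?ler0n ?addr_ge0 ?normr_ge0 | by rewrite mulr_ge0 ?ler0n | ].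
    rewrite !exprMn sqrtCK.
    apply: (le_tr (2^+2 * (2*(p^+2+q^+2)))).
      by apply: ler_wpM2l; [apply: exprn_ge0; apply: ler0n | apply: L_sum2; apply: normr_ge0].
    apply: (le_tr (2^+2 * (2 * hh))).
      by apply: ler_wpM2l; [apply: exprn_ge0; apply: ler0n | apply: ler_wpM2l; [apply: ler0n | exact: pe]].
    by apply: (le_cert _ _ hh); [ring | exact: hh0].
  have A1 : 1 - 4 * p <= `|2*a-1|^+2.
    rewrite -normrX (_ : (2*a-1)^+2 = 1 - 4 * (a - a^+2)); last by ring.
    by have := lerB_dist 1 (4 * (a - a^+2)); rewrite normr1 normrM normr_nat.
  have A2 : 1 - 4 * q <= `|2*d-1|^+2.
    rewrite -normrX (_ : (2*d-1)^+2 = 1 - 4 * (d - d^+2)); last by ring.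
    by have := lerB_dist 1 (4 * (d - d^+2)); rewrite normr1 normrM normr_nat.
  have n6 : 0 <= 2 - 6 * sqrtC hh.
    apply: (le_cert _ _ ((2 - eps * 9) + 3 * eps + 6 * (eps - sqrtC hh))); first by ring.
    apply: addr_ge0; [apply: addr_ge0|]; first by rewrite subr_ge0 ltW.
    - by rewrite mulr_ge0 ?ler0n.
    - by rewrite mulr_ge0 ?ler0n // subr_ge0.
  have n7 : 0 <= `|2*a-1|^+2 + `|2*c|^+2 + `|2*d-1|^+2 by rewrite !addr_ge0 ?exprn_ge0 ?normr_ge0.
  rewrite ler_sqrtC ?nnegrE //.
  apply: (le_tr ((1 - 4 * p) + 0 + (1 - 4 * q))).
    apply: (le_cert _ _ (2 * (3 * sqrtC hh - 2 * (p + q)))); first by ring.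
    by rewrite mulr_ge0 ?ler0n // subr_ge0.
  by apply: (lerD (lerD A1 _) A2); apply: exprn_ge0; apply: normr_ge0.
- exists (inord (c1 + c2)); rewrite inordK; first by rewrite -mulrA ue.
  by case: (c1); case: (c2).
- exact: su'.
- move=> H2; move: (key 2 H2) D1 D2 ds dsum; clear F1 F2 trj key.
  case: c1; case: c2 => //= _; rewrite ?mulr1n => D1 D2 ds dsum.
  rewrite ke; apply: (GK k (`|1-a|) (`|c|) (`|1-d|) (`|a|) (`|1-a-d|) (`|d|) eps hh k0) => //.
  + apply: le_trans (Lbd0 a); rewrite lerD2l lerN2.
    by apply: le_trans dsum; rewrite lerDl normr_ge0.
  + apply: le_trans (Lsum1 a d); rewrite lerD2l lerN2 //.
  + apply: le_trans (Lbd0 d); rewrite lerD2l lerN2.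
    by apply: le_trans dsum; rewrite lerDr normr_ge0.
  + have e1 : a - a^+2 = a * (1-a) by ring.
    have e2 : d - d^+2 = d * (1-d) by ring.
    by rewrite /hh /p /q /r -!normrM e1 e2 (mulrC (1-a-d) c).
- split.
 + move=> H2; have H2' : `|a + d - 0%:R| < 1/2 by rewrite subr0.
   move: (key 0%N H2') D1 D2 ds dsum; clear F1 F2 trj key.
   case: c1; case: c2 => //= _; rewrite ?mulr0n ?subr0 => D1 D2 ds dsum.
   rewrite ke; apply: (GK k (`|a|) (`|c|) (`|d|) (`|1-a|) (`|1-a-d|) (`|1-d|) eps hh k0) => //.
   * rewrite distrC; apply: le_trans (Lbd1 a); rewrite lerD2l lerN2.
     by apply: le_trans dsum; rewrite lerDl normr_ge0.
   * apply: le_trans (Lsum0 a d); rewrite lerD2l lerN2 //.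
   * rewrite distrC; apply: le_trans (Lbd1 d); rewrite lerD2l lerN2.
     by apply: le_trans dsum; rewrite lerDr normr_ge0.
   * have e1 : a - a^+2 = (1-a) * a by ring.
     have e2 : d - d^+2 = (1-d) * d by ring.
     by rewrite /hh /p /q /r -!normrM e1 e2 (mulrC (1-a-d) c).
 + move=> H2; move: (key 1%N H2) D1 D2 ds dsum; clear F1 F2 trj key.
   case: c1; case: c2 => //= _; rewrite ?mulr0n ?mulr1n ?subr0 => D1 D2 ds dsum.
   * right; rewrite ue; apply: L_sqrt_le => //.
     by rewrite addr_ge0 ?exprn_ge0 ?normr_ge0.
   * left; rewrite ue; apply: L_sqrt_le => //.
     by rewrite addr_ge0 ?exprn_ge0 ?normr_ge0.
Qed.
Lemma o0 : ord0 = 0 :> 'I_2. Proof. exact: val_inj. Qed.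
Lemma o1 : lift ord0 ord0 = 1 :> 'I_2. Proof. exact: val_inj. Qed.
Definition mk2 (x y z w : C) : 'M[C]_2 :=
  \matrix_(i < 2, j < 2) nth 0 (nth [::] [:: [:: x; y]; [:: z; w]] i) j.
Lemma mk2E x y z w : [/\ (mk2 x y z w) 0 0 = x, (mk2 x y z w) 0 1 = y, (mk2 x y z w) 1 0 = z & (mk2 x y z w) 1 1 = w].
Proof. by rewrite !mxE /=. Qed.
Lemma tr2 (M : 'M[C]_2) : \tr M = M 0 0 + M 1 1.
Proof. by rewrite /mxtrace !big_ord_recl big_ord0 addr0 /= o0 o1. Qed.
Lemma mul2 (M N : 'M[C]_2) i j : (M *m N) i j = M i 0 * N 0 j + M i 1 * N 1 j.
Proof. by rewrite !mxE !big_ord_recl big_ord0 addr0 /= o0 o1. Qed.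
Lemma hsE (M : 'M[C]_2) : hs_norm M = sqrtC (`|M 0 0|^+2 + `|M 0 1|^+2 + `|M 1 0|^+2 + `|M 1 1|^+2).
Proof. rewrite /hs_norm tr2 !mul2 !mxE !normCKC. congr sqrtC. ring. Qed.
Lemma hs_st (M : 'M[C]_2) : hs_norm M = sqrtC (\tr (M^t* *m M)).
Proof. by rewrite /hs_norm map_trmx. Qed.
Lemma st_mul (M N : 'M[C]_2) : (M *m N)^t* = N^t* *m M^t*.
Proof. by rewrite trmx_mul map_mxM. Qed.
Lemma hs_inv (P M : 'M[C]_2) : P *m P^t* = 1%:M -> hs_norm (P^t* *m M *m P) = hs_norm M.
Proof.
move=> PP; rewrite !hs_st !st_mul trmxCK.
rewrite -!mulmxA (mulmxA P (P^t* )) PP mul1mx mxtrace_mulC -!mulmxA.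
by rewrite PP mulmx1.
Qed.
Lemma schur2 (A : 'M[C]_2) : exists P T : 'M[C]_2,
  [/\ P \is unitarymx, P *m P^t* = 1%:M, P^t* *m P = 1%:M, T 0 1 = 0 & A = P^t* *m T *m P].
Proof.
have [P Pu] := Schur A isT.
rewrite /similar_to conjymx //= => /is_trig_mxP Ht.
have PP : P *m P^t* = 1%:M by apply/unitarymxP.
have PP' : P^t* *m P = 1%:M by apply: mulmx1C.
exists P, (P *m A *m P^t*); split => //; first by apply: Ht.
by rewrite !mulmxA PP' mul1mx -mulmxA PP' mulmx1.
Qed.
Lemma ord2 (i : 'I_2) : i = 0 \/ i = 1.
Proof. by case: i => [[|[|//]]] hi; [left|right]; apply: val_inj. Qed.
Lemma mx2_ext (M N : 'M[C]_2) : M 0 0 = N 0 0 -> M 0 1 = N 0 1 -> M 1 0 = N 1 0 -> M 1 1 = N 1 1 -> M = N.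
Proof.
move=> h1 h2 h3 h4; apply/matrixP => i j.
by case: (ord2 i) => ->; case: (ord2 j) => ->.
Qed.
Lemma n0sq : `|0 : C|^+2 = 0. Proof. by rewrite normr0 expr2 mulr0. Qed.
Lemma hs_form (M : 'M[C]_2) x y z : M 0 0 = x -> M 0 1 = 0 -> M 1 0 = y -> M 1 1 = z ->
  hs_norm M = sqrtC (`|x|^+2 + `|y|^+2 + `|z|^+2).
Proof. by rewrite hsE => -> -> -> ->; rewrite n0sq addr0. Qed.
Lemma eB (M N : 'M[C]_2) i j : (M - N) i j = M i j - N i j. Proof. by rewrite !mxE. Qed.
Lemma eZ k (M : 'M[C]_2) i j : (k *: M) i j = k * M i j. Proof. by rewrite !mxE. Qed.
Lemma e1 : [/\ (1%:M : 'M[C]_2) 0 0 = 1, (1%:M : 'M[C]_2) 0 1 = 0, (1%:M : 'M[C]_2) 1 0 = 0 & (1%:M : 'M[C]_2) 1 1 = 1].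
Proof. by rewrite !mxE. Qed.
Lemma idem_conj (P P0 : 'M[C]_2) : P *m P^t* = 1%:M -> P0 *m P0 = P0 -> \tr P0 = 1 ->
  (P^t* *m P0 *m P) *m (P^t* *m P0 *m P) = P^t* *m P0 *m P /\ \rank (P^t* *m P0 *m P) = 1%N.
Proof.
move=> PP h0 t0; set Q := P^t* *m P0 *m P.
have QQ : Q *m Q = Q.
  by rewrite /Q !mulmxA -(mulmxA (P^t* *m P0) P (P^t* )) PP mulmx1 -(mulmxA (P^t* ) P0 P0) h0.
have tQ : \tr Q = 1 by rewrite /Q mxtrace_mulC mulmxA PP mul1mx t0.
split => //.
have r2 : (\rank Q <= 2)%N := rank_leq_row Q.
have rn0 : \rank Q != 0%N.
  rewrite mxrank_eq0; apply/eqP => Q0.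
  by move: tQ; rewrite Q0 mxtrace0 => /esym/eqP; rewrite oner_eq0.
have rn2 : \rank Q != 2%N.
  apply/negP => /eqP h; have : row_free Q by rewrite /row_free h.
  rewrite row_free_unit => Qu.
  have := congr1 (mulmx^~ (invmx Q)) QQ; rewrite /= -mulmxA mulmxV // mulmx1 => Q1.
  by move: tQ; rewrite Q1 mxtrace1 => /eqP; rewrite pnatr_eq1.
by move: r2 rn0 rn2; case: (\rank Q) => [|[|[|]]].
Qed.
Lemma conj_lin (P M N : 'M[C]_2) : P^t* *m M *m P - P^t* *m N *m P = P^t* *m (M - N) *m P.
Proof. by rewrite mulmxBr mulmxBl. Qed.
End S.


Theorem lemmal (C : numClosedFieldType) :
  (* (a) *)
  ((forall s t : C, 0 <= s -> s < t -> t <= 1/4 -> rho s < rho t) /\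
   (forall s t : C, 0 <= s -> s < t -> t <= 1/4 -> kappa s < kappa t) /\
   (forall t : C, 0 <= t -> t <= 1/4 -> rho t <= kappa t) /\
   (forall n : nat, (0 < n)%N ->
      rho (n%:R / (n.+1%:R ^+ 2) : C) = n.+1%:R / n%:R /\
      kappa (n%:R / (n.+1%:R ^+ 2) : C) = (1 - sqrtC 2 / n.+1%:R)^-1 /\
      (1 - sqrtC 2 / n.+1%:R)^-1 < ((1 : C) - 10 / (7 * n.+1%:R))^-1)) /\
  (* (b) *)
  (forall (A : 'M[C]_2) (eps : C),
     hs_norm (A - A *m A) <= eps -> eps < 2/9 ->
     sqrtC (2 - 6 * hs_norm (A - A *m A)) <= hs_norm (2 *: A - 1%:M) /\
         (exists j : 'I_3, \tr A \in cdisc (j%:R) (sqrtC 2 * rho eps * eps)) /\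
         (forall z : C, (exists j : 'I_3, z \in cdisc (j%:R) (sqrtC 2 * rho eps * eps)) ->
                        exists j : 'I_3, z \in cdisc (j%:R) (10/21)) /\
         (`|\tr A - 2| < 1/2 -> hs_norm (1%:M - A) <= kappa eps * eps) /\
         (`|\tr A| < 1/2 -> hs_norm A <= kappa eps * eps) /\
         (`|\tr A - 1| < 1/2 ->
            exists P : 'M[C]_2, P *m P = P /\ \rank P = 1%N /\
                                hs_norm (A - P) <= rho eps * eps)).
Proof.
split.
  have [m1 [m2 m3]] := part_a_mono C.
  by split => //; split => //; split => //; exact: part_a_n.
move=> A eps H1 H2.
have [P [T [Pu PP PP' T01 AE]]] := schur2 C A.
pose a := T 0 0; pose c := T 1 0; pose d := T 1 1.
have [i00 i01 i10 i11] := e1 C.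
have conj M : hs_norm (P^t* *m M *m P) = hs_norm M by apply: hs_inv.
have AA : A *m A = P^t* *m (T *m T) *m P by rewrite AE !mulmxA mulmxtVK.
have trA : \tr A = a + d by rewrite AE -mulmxA mxtrace_mulC -mulmxA PP mulmx1 tr2.
have H1' : hs_norm (A - A *m A) = sqrtC (`|a - a^+2|^+2 + `|c*(1-a-d)|^+2 + `|d - d^+2|^+2).
  rewrite AA {1}AE conj_lin conj; apply: hs_form; rewrite eB mul2 ?T01 /a /c /d; ring.
have Hh : sqrtC (`|a - a^+2|^+2 + `|c*(1-a-d)|^+2 + `|d - d^+2|^+2) <= eps by rewrite -H1'.
have [C1 C2 C3 C4 [C5 C6]] := scalar_b C a c d eps Hh H2.
split.
  rewrite H1' (_ : 2 *: A - 1%:M = P^t* *m (2 *: T - 1%:M) *m P); last first.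
    by rewrite mulmxBr mulmxBl -scalemxAr -scalemxAl -AE mulmx1 PP'.
  rewrite conj (hs_form _ _ (2*a-1) (2*c) (2*d-1)) //;
    by rewrite eB eZ ?T01; rewrite ?i00 ?i01 ?i10 ?i11; rewrite ?mulr0 ?subr0.
split.
  have [j hj] := C2; exists j; by rewrite unfold_in /cdisc trA.
split.
  move=> z [j]; rewrite !unfold_in /cdisc => hj; exists j.
  by rewrite unfold_in /cdisc (le_trans hj C3).
split.
  rewrite trA => h; rewrite (_ : 1%:M - A = P^t* *m (1%:M - T) *m P); last first.
    by rewrite mulmxBr mulmxBl mulmx1 PP' -AE.
  rewrite conj (hs_form _ _ (1-a) (-c) (1-d)) ?normrN ?C4 //;
    by rewrite eB ?T01; rewrite ?i00 ?i01 ?i10 ?i11; rewrite ?subr0 ?sub0r.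
split.
  rewrite trA => h; rewrite AE conj (hs_form _ _ (a) (c) (d)) ?C5 //.
rewrite trA => /C6 [h|h].
- set P0 := mk2 C 0 0 c 1.
  have [E00 E01 E10 E11] := mk2E C 0 0 c 1.
  have P0P0 : P0 *m P0 = P0 by apply: mx2_ext; rewrite !mul2 ?E00 ?E01 ?E10 ?E11; ring.
  have tP0 : \tr P0 = 1 by rewrite tr2 E00 E11 add0r.
  have [QQ rQ] := idem_conj C P P0 PP P0P0 tP0.
  exists (P^t* *m P0 *m P); split => //; split => //.
  rewrite AE conj_lin conj (hs_form _ _ a 0 (d-1)); first by rewrite n0sq addr0.
  + by rewrite eB E00 subr0.
  + by rewrite eB T01 E01 subr0.
  + by rewrite eB E10 subrr.
  + by rewrite eB E11.
- set P0 := mk2 C 1 0 c 0.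
  have [E00 E01 E10 E11] := mk2E C 1 0 c 0.
  have P0P0 : P0 *m P0 = P0 by apply: mx2_ext; rewrite !mul2 ?E00 ?E01 ?E10 ?E11; ring.
  have tP0 : \tr P0 = 1 by rewrite tr2 E00 E11 addr0.
  have [QQ rQ] := idem_conj C P P0 PP P0P0 tP0.
  exists (P^t* *m P0 *m P); split => //; split => //.
  rewrite AE conj_lin conj (hs_form _ _ (a-1) 0 d); first by rewrite n0sq addr0.
  + by rewrite eB E00.
  + by rewrite eB T01 E01 subr0.
  + by rewrite eB E10 subrr.
  + by rewrite eB E11 subr0.
Qed.
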